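(* Let $A$ be a connected monounary algebra. Then there exists $B\in\mathbf R(A)\cap\mathcal U^\bigstar_c$ with $\mathbf V(A)=\mathbf V(B)$.
   Context: A monounary algebra is a pair $(A,f)$ with $A$ a nonempty set and $f:A\to A$; a partial monounary algebra allows $f$ to be partial. Direct products are coordinatewise. It is connected if for all $x,y$ there are $m,n\ge0$ with $f^m(x)=f^n(y)$. A retract of $A$ is a nonempty subalgebra $M$ such that there is an endomorphism $h:A\to M$ with $h|_M=\mathrm{id}$; $\mathbf R(A)$ is the class of algebras isomorphic to a retract of $A$. A retract variety is a class closed under isomorphisms, retracts and direct products; $\mathbf V(\mathcal K)$ is the smallest retract variety containing $\mathcal K$. For $x\in A$: $f^{-1}(x)=\{y:f(y)=x\}$, $f^{-n}(x)=\bigcup_{z\in f^{-(n-1)}(x)}f^{-1}(z)$, $P(x)=\{x\}\cup\bigcup_{n\ge1}f^{-n}(x)$, regarded as a partial monounary algebra with $f$ restricted to those $y\in P(x)$ with $f(y)\in P(x)$. Condition ($\bigstar$) on $(A,f)$: whenever $x_1,x_2,x_3\in A$ with $f(x_1)=f(x_2)=f(x_3)$ and $P(x_1),P(x_2),P(x_3)$ pairwise isomorphic, then $|\{x_1,x_2,x_3\}|\le2$. $\mathcal U^\bigstar_c$ is the class of connected monounary algebras satisfying ($\bigstar$). *)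

(* Defs.v *)
From Stdlib Require Import Arith ClassicalEpsilon.

Set Implicit Arguments.

Record alg := Alg {
  carrier :> Type;
  op : carrier -> carrier;
  nonempty : inhabited carrier
}.

Arguments op {a} _.

Fixpoint iter {T : Type} (n : nat) (f : T -> T) (x : T) : T :=
  match n with 0 => x | S k => f (iter k f x) end.

Definition is_hom {A B : alg} (h : A -> B) : Prop :=
  forall x, h (op x) = op (h x).

Definition iso (A B : alg) : Prop :=
  exists (h : A -> B) (g : B -> A),
    is_hom h /\ is_hom g /\ (forall x, g (h x) = x) /\ (forall y, h (g y) = y).

Definition subalg {A : alg} (S : A -> Prop)
  (cl : forall x, S x -> S (op x)) (ne : exists x, S x) : alg :=
  @Alg {x : A | S x}
       (fun p => exist S (op (proj1_sig p)) (cl _ (proj2_sig p)))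
       (match ne with ex_intro _ x Hx => inhabits (exist S x Hx) end).

Definition retract_set {A : alg} (S : A -> Prop) : Prop :=
  exists h : A -> A, is_hom h /\ (forall x, S (h x)) /\ (forall x, S x -> h x = x).

Definition R (A B : alg) : Prop :=
  exists (S : A -> Prop) (cl : forall x, S x -> S (op x)) (ne : exists x, S x),
    retract_set S /\ iso B (@subalg A S cl ne).

Definition prod_alg (I : Type) (F : I -> alg) : alg :=
  @Alg (forall i, F i) (fun x i => op (x i))
       (inhabits (fun i => epsilon (nonempty (F i)) (fun _ => True))).

Definition retract_variety (C : alg -> Prop) : Prop :=
  (forall A B, C A -> iso A B -> C B) /\
  (forall A B, C A -> R A B -> C B) /\
  (forall (I : Type) (F : I -> alg), (forall i, C (F i)) -> C (prod_alg F)).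

Definition V (K : alg -> Prop) (B : alg) : Prop :=
  forall C, retract_variety C -> (forall A, K A -> C A) -> C B.

Definition single (A : alg) : alg -> Prop := fun X => X = A.

Definition connected (A : alg) : Prop :=
  forall x y : A, exists m n, iter m op x = iter n op y.

(* y belongs to P(x) = {x} ∪ ⋃_{n>=1} f^{-n}(x) *)
Definition inP {A : alg} (x y : A) : Prop := exists n, iter n op y = x.

(* P(x1) and P(x2) are isomorphic as partial monounary algebras
   (f restricted to those y with f y in P(x)); maps are represented by
   functions A -> A whose values matter only on P(x1), P(x2). *)
Definition P_iso {A : alg} (x1 x2 : A) : Prop :=
  exists phi psi : A -> A,
    (forall y, inP x1 y -> inP x2 (phi y)) /\
    (forall y, inP x2 y -> inP x1 (psi y)) /\
    (forall y, inP x1 y -> psi (phi y) = y) /\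
    (forall y, inP x2 y -> phi (psi y) = y) /\
    (forall y, inP x1 y -> inP x1 (op y) ->
        inP x2 (op (phi y)) /\ phi (op y) = op (phi y)) /\
    (forall y, inP x2 y -> inP x2 (op y) ->
        inP x1 (op (psi y)) /\ psi (op y) = op (psi y)).

Definition star (A : alg) : Prop :=
  forall x1 x2 x3 : A, op x1 = op x2 -> op x2 = op x3 ->
    P_iso x1 x2 -> P_iso x1 x3 -> P_iso x2 x3 ->
    x1 = x2 \/ x1 = x3 \/ x2 = x3.

Definition Ustar_c (A : alg) : Prop := connected A /\ star A.

(* Main.v *)
Require Import Defs.
From Stdlib Require Import Arith Lia ClassicalEpsilon ProofIrrelevance FunctionalExtensionality PropExtensionality Classical.

Lemma iter_S_r {T} n (f : T -> T) x : iter n f (f x) = f (iter n f x).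
Proof. induction n; simpl; congruence. Qed.

Lemma iter_add {T} m n (f : T -> T) x : iter (m + n) f x = iter m f (iter n f x).
Proof. induction m; simpl; congruence. Qed.

Lemma min_nat (P : nat -> Prop) : (exists n, P n) -> exists n, P n /\ forall m, P m -> n <= m.
Proof.
  intros [n Hn]. apply NNPP; intro Hno.
  assert (H : forall k, forall m, m <= k -> ~ P m).
  { induction k; intros m Hm HP.
    - apply Hno. exists m. split; [exact HP|]. intros; lia.
    - destruct (Nat.eq_dec m (S k)) as [->|ne]; [|apply (IHk m); [lia|exact HP]].
      apply Hno. exists (S k). split; [exact HP|]. intros m' Hm'.
      destruct (le_lt_dec (S k) m'); [assumption|]. exfalso; apply (IHk m'); [lia|exact Hm']. }
  exact (H n n (le_n _) Hn).
Qed.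

Lemma epsilon_ext {T} (i : inhabited T) (P Q : T -> Prop) :
  (forall x, P x <-> Q x) -> epsilon i P = epsilon i Q.
Proof.
  intro H. f_equal. apply functional_extensionality. intro x.
  apply propositional_extensionality. apply H.
Qed.

Section Generic.
Variable X : alg.

Definition bis2 (E : X -> X -> Prop) : Prop :=
  forall a b, E a b ->
   (forall a', op a' = a -> exists b', op b' = b /\ E a' b') /\
   (forall b', op b' = b -> exists a', op a' = a /\ E a' b') /\
   (forall a1 a2, op a1 = a -> op a2 = a -> a1 <> a2 ->
      exists b1 b2, op b1 = b /\ op b2 = b /\ b1 <> b2 /\ E a1 b1 /\ E a2 b2) /\
   (forall b1 b2, op b1 = b -> op b2 = b -> b1 <> b2 ->
      exists a1 a2, op a1 = a /\ op a2 = a /\ a1 <> a2 /\ E a1 b1 /\ E a2 b2).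

Definition eqv (a b : X) : Prop := exists E, bis2 E /\ E a b.

Lemma eqv_refl a : eqv a a.
Proof.
  exists eq. split; [|reflexivity].
  intros x y <-. repeat split.
  - intros a' H. exists a'. auto.
  - intros b' H. exists b'. auto.
  - intros a1 a2 H1 H2 Hn. exists a1, a2. auto.
  - intros a1 a2 H1 H2 Hn. exists a1, a2. auto.
Qed.

Lemma eqv_sym a b : eqv a b -> eqv b a.
Proof.
  intros [E [HE Hab]]. exists (fun x y => E y x). split; [|exact Hab].
  intros x y Hxy. destruct (HE y x Hxy) as [H1 [H2 [H3 H4]]]. repeat split.
  - intros a' Ha'. destruct (H2 a' Ha') as [b' [? ?]]. exists b'. auto.
  - intros b' Hb'. destruct (H1 b' Hb') as [a' [? ?]]. exists a'. auto.
  - intros a1 a2 Ha1 Ha2 Hn. destruct (H4 a1 a2 Ha1 Ha2 Hn) as [b1 [b2 ?]]. exists b1, b2. tauto.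
  - intros a1 a2 Ha1 Ha2 Hn. destruct (H3 a1 a2 Ha1 Ha2 Hn) as [b1 [b2 ?]]. exists b1, b2. tauto.
Qed.

Lemma eqv_bis : bis2 eqv.
Proof.
  intros a b [E [HE Hab]]. destruct (HE a b Hab) as [H1 [H2 [H3 H4]]].
  repeat split.
  - intros a' Ha'. destruct (H1 a' Ha') as [b' [? ?]]. exists b'. split; auto. exists E; auto.
  - intros b' Hb'. destruct (H2 b' Hb') as [a' [? ?]]. exists a'. split; auto. exists E; auto.
  - intros a1 a2 Ha1 Ha2 Hn. destruct (H3 a1 a2 Ha1 Ha2 Hn) as [b1 [b2 [? [? [? [? ?]]]]]].
    exists b1, b2. repeat split; auto; exists E; auto.
  - intros a1 a2 Ha1 Ha2 Hn. destruct (H4 a1 a2 Ha1 Ha2 Hn) as [b1 [b2 [? [? [? [? ?]]]]]].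
    exists b1, b2. repeat split; auto; exists E; auto.
Qed.

Lemma eqv_trans a b c : eqv a b -> eqv b c -> eqv a c.
Proof.
  intros Hab Hbc.
  exists (fun x z => exists y, eqv x y /\ eqv y z). split; [|exists b; auto].
  intros x z [y [Hxy Hyz]].
  destruct (eqv_bis x y Hxy) as [A1 [A2 [A3 A4]]].
  destruct (eqv_bis y z Hyz) as [B1 [B2 [B3 B4]]].
  repeat split.
  - intros x' Hx'. destruct (A1 x' Hx') as [y' [Hy' E1]]. destruct (B1 y' Hy') as [z' [Hz' E2]].
    exists z'. split; auto. exists y'; auto.
  - intros z' Hz'. destruct (B2 z' Hz') as [y' [Hy' E2]]. destruct (A2 y' Hy') as [x' [Hx' E1]].
    exists x'. split; auto. exists y'; auto.
  - intros x1 x2 H1 H2 Hn. destruct (A3 x1 x2 H1 H2 Hn) as [y1 [y2 [Hy1 [Hy2 [Hyn [E1 E2]]]]]].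
    destruct (B3 y1 y2 Hy1 Hy2 Hyn) as [z1 [z2 [Hz1 [Hz2 [Hzn [F1 F2]]]]]].
    exists z1, z2. repeat split; auto; [exists y1|exists y2]; auto.
  - intros z1 z2 H1 H2 Hn. destruct (B4 z1 z2 H1 H2 Hn) as [y1 [y2 [Hy1 [Hy2 [Hyn [E1 E2]]]]]].
    destruct (A4 y1 y2 Hy1 Hy2 Hyn) as [x1 [x2 [Hx1 [Hx2 [Hxn [F1 F2]]]]]].
    exists x1, x2. repeat split; auto; [exists y1|exists y2]; auto.
Qed.

Lemma bis_eqv E a b : bis2 E -> E a b -> eqv a b.
Proof. intros; exists E; auto. Qed.

Definition Cyc (x : X) : Prop := inP x (op x).

Lemma P_iso_sym (x1 x2 : X) : P_iso x1 x2 -> P_iso x2 x1.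
Proof.
  intros [phi [psi [H1 [H2 [H3 [H4 [H5 H6]]]]]]].
  exists psi, phi. split; [exact H2|split; [exact H1|split; [exact H4|split; [exact H3|split; [exact H6|exact H5]]]]].
Qed.

Lemma P_iso_root (x1 x2 : X) (phi psi : X -> X) :
  (forall y, inP x1 y -> inP x2 (phi y)) ->
  (forall y, inP x2 y -> psi y = y -> True) ->
  (forall y, inP x1 y -> psi (phi y) = y) ->
  (forall y, inP x2 y -> inP x2 (op y) -> inP x1 (op (psi y)) /\ psi (op y) = op (psi y)) ->
  ~ Cyc x1 -> phi x1 = x2.
Proof.
  intros H1 _ H3 H6 Hc.
  assert (Hx : inP x1 x1) by (exists 0; reflexivity).
  destruct (H1 x1 Hx) as [n Hn]. destruct n as [|m]; [exact Hn|].
  exfalso. apply Hc.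
  assert (Hop : inP x2 (op (phi x1))) by (exists m; rewrite iter_S_r; exact Hn).
  destruct (H6 (phi x1) (ex_intro _ (S m) Hn) Hop) as [Hc' _].
  rewrite H3 in Hc' by exact Hx. exact Hc'.
Qed.

Lemma P_iso_bis (x1 x2 : X) (phi psi : X -> X) :
    (forall y, inP x1 y -> inP x2 (phi y)) ->
    (forall y, inP x2 y -> inP x1 (psi y)) ->
    (forall y, inP x1 y -> psi (phi y) = y) ->
    (forall y, inP x2 y -> phi (psi y) = y) ->
    (forall y, inP x1 y -> inP x1 (op y) ->
        inP x2 (op (phi y)) /\ phi (op y) = op (phi y)) ->
    (forall y, inP x2 y -> inP x2 (op y) ->
        inP x1 (op (psi y)) /\ psi (op y) = op (psi y)) ->
  bis2 (fun a b => inP x1 a /\ b = phi a).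
Proof.
  intros H1 H2 H3 H4 H5 H6 a b [Ha ->].
  assert (child1 : forall a', op a' = a -> inP x1 a' /\ op (phi a') = phi a).
  { intros a' Ha'. destruct Ha as [n Hn].
    assert (inP x1 a') by (exists (S n); simpl; rewrite <- iter_S_r, Ha'; exact Hn).
    split; auto. destruct (H5 a' H) as [_ E]; [rewrite Ha'; exists n; auto|].
    rewrite <- E, Ha'. reflexivity. }
  assert (Hb : inP x2 (phi a)) by auto.
  assert (child2 : forall b', op b' = phi a -> op (psi b') = a /\ inP x1 (psi b') /\ b' = phi (psi b')).
  { intros b' Hb'. destruct Hb as [n Hn].
    assert (inP x2 b') by (exists (S n); simpl; rewrite <- iter_S_r, Hb'; exact Hn).
    split; [|split; [apply H2; exact H | symmetry; apply H4; exact H]].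
    destruct (H6 b' H) as [_ E]; [rewrite Hb'; exists n; auto|].
    rewrite <- E, Hb'. auto. }
  repeat split.
  - intros a' Ha'. exists (phi a'). destruct (child1 a' Ha'). auto.
  - intros b' Hb'. exists (psi b'). destruct (child2 b' Hb') as [? [? ?]]. auto.
  - intros a1 a2 Ha1 Ha2 Hn. exists (phi a1), (phi a2).
    destruct (child1 a1 Ha1), (child1 a2 Ha2). repeat split; auto.
    intro E. apply Hn. rewrite <- (H3 a1), <- (H3 a2), E; auto.
  - intros b1 b2 Hb1 Hb2 Hn. exists (psi b1), (psi b2).
    destruct (child2 b1 Hb1) as [? [? ?]], (child2 b2 Hb2) as [? [? ?]]. repeat split; auto.
    intro E. apply Hn. congruence.
Qed.

Lemma cyc_sib (x1 x2 : X) : op x1 = op x2 -> Cyc x1 -> Cyc x2 -> x1 = x2.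
Proof.
  intros Hop [n Hn] [m Hm]. rewrite <- Hop in Hm.
  assert (Hc : iter (S m) op (op x1) = op x1) by (simpl; rewrite Hm; auto).
  transitivity (iter n op (iter (S m) op (op x1))); [rewrite Hc; auto|].
  rewrite <- iter_add. replace (n + S m) with (m + S n) by lia.
  rewrite iter_add. simpl. rewrite Hn. exact Hm.
Qed.

Lemma P_iso_eqv (x1 x2 : X) : op x1 = op x2 -> P_iso x1 x2 -> x1 = x2 \/ eqv x1 x2.
Proof.
  intros Hop HP.
  destruct (classic (Cyc x1)) as [C1|C1].
  - destruct (classic (Cyc x2)) as [C2|C2]; [left; apply cyc_sib; auto|].
    right. apply eqv_sym.
    destruct (P_iso_sym _ _ HP) as [phi [psi [H1 [H2 [H3 [H4 [H5 H6]]]]]]].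
    pose proof (P_iso_bis _ _ _ _ H1 H2 H3 H4 H5 H6) as B.
    apply (bis_eqv _ _ _ B). split; [exists 0; reflexivity|].
    symmetry. apply (P_iso_root x2 x1 phi psi); auto.
  - right. destruct HP as [phi [psi [H1 [H2 [H3 [H4 [H5 H6]]]]]]].
    pose proof (P_iso_bis _ _ _ _ H1 H2 H3 H4 H5 H6) as B.
    apply (bis_eqv _ _ _ B). split; [exists 0; reflexivity|].
    symmetry. apply (P_iso_root x1 x2 phi psi); auto.
Qed.

End Generic.

Section Main.
Variable A : alg.
Hypothesis hA : connected A.

Definition inhA : inhabited A := nonempty A.
Definition cycA (x : A) := exists n, iter (S n) op x = x.
Definition x0 : A := epsilon inhA cycA.
Definition T (y : A) := exists n, y = iter n op x0.
Local Notation E := (eqv A).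

Lemma T_op y : T y -> T (op y).
Proof. intros [n ->]. exists (S n). reflexivity. Qed.

Lemma T_iter n y : T y -> T (iter n op y).
Proof. induction n; simpl; auto using T_op. Qed.

Lemma cyc_back p a : iter (S p) op x0 = x0 -> iter p op (op (iter a op x0)) = iter a op x0.
Proof.
  intro Hp. change (op (iter a op x0)) with (iter (S a) op x0).
  rewrite <- iter_add. replace (p + S a) with (a + S p) by lia.
  rewrite iter_add, Hp. reflexivity.
Qed.

Lemma T_sib u v : T u -> T v -> op u = op v -> u = v.
Proof.
  intros [a ->] [b ->] H.
  assert (key : forall a b, a < b -> op (iter a op x0) = op (iter b op x0) -> iter a op x0 = iter b op x0).
  { clear a b H. intros a b Hab H.
    assert (Hc : cycA (iter (S a) op x0)).
    { exists (b - a - 1). rewrite <- iter_add.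
      replace (S (b - a - 1) + S a) with (S b) by lia. symmetry. exact H. }
    assert (Hx : cycA x0) by (apply (epsilon_spec inhA cycA); eauto).
    destruct Hx as [p Hp].
    rewrite <- (cyc_back p a Hp), <- (cyc_back p b Hp). f_equal. exact H. }
  destruct (lt_eq_lt_dec a b) as [[lt| e]|lt]; [| subst; reflexivity |]; auto.
  symmetry. apply key; auto.
Qed.

Definition sel1 (c z : A) : A := epsilon inhA (fun w => op w = c /\ E w z /\
   (T w \/ ~ (exists w', op w' = c /\ E w' z /\ T w'))).
Definition sel2 (c z : A) : A := epsilon inhA (fun w => op w = c /\ E w z /\ w <> sel1 c z).

Lemma sel1_class c z z' : E z z' -> sel1 c z = sel1 c z'.
Proof.
  intro H. unfold sel1. apply epsilon_ext. intro w.
  assert (H' : E z' z) by (apply eqv_sym; exact H).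
  split.
  - intros [h1 [h2 h3]]. split; [exact h1|split; [eapply eqv_trans; eauto|]].
    destruct h3 as [h3|N]; [left; exact h3|right].
    intros [w' [? [? ?]]]. apply N. exists w'. repeat split; auto.
    eapply eqv_trans; eauto.
  - intros [h1 [h2 h3]]. split; [exact h1|split; [eapply eqv_trans; eauto|]].
    destruct h3 as [h3|N]; [left; exact h3|right].
    intros [w' [? [? ?]]]. apply N. exists w'. repeat split; auto.
    eapply eqv_trans; eauto.
Qed.

Lemma sel2_class c z z' : E z z' -> sel2 c z = sel2 c z'.
Proof.
  intro H. unfold sel2. rewrite (sel1_class c z z' H). apply epsilon_ext. intro w.
  assert (H' : E z' z) by (apply eqv_sym; exact H).
  split; intros [h1 [h2 h3]]; (split; [exact h1|split; [eapply eqv_trans; eauto|exact h3]]).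
Qed.

Lemma sel1_spec c z : (exists w, op w = c /\ E w z) ->
  op (sel1 c z) = c /\ E (sel1 c z) z /\
   (T (sel1 c z) \/ ~ (exists w', op w' = c /\ E w' z /\ T w')).
Proof.
  intros [w [Hw Ew]]. apply (epsilon_spec inhA (fun w => op w = c /\ E w z /\
   (T w \/ ~ (exists w', op w' = c /\ E w' z /\ T w')))).
  destruct (classic (exists w', op w' = c /\ E w' z /\ T w')) as [[w' [? [? ?]]]|N].
  - exists w'. auto.
  - exists w. auto.
Qed.

Lemma sel1_T c z u : op u = c -> T u -> E u z -> sel1 c z = u.
Proof.
  intros Hu Tu Eu. destruct (sel1_spec c z (ex_intro _ u (conj Hu Eu))) as [H1 [H2 [H3|H3]]].
  - apply T_sib; auto. congruence.
  - exfalso. apply H3. exists u. auto.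
Qed.

Lemma sel2_spec c z : (exists w, op w = c /\ E w z /\ w <> sel1 c z) ->
  op (sel2 c z) = c /\ E (sel2 c z) z /\ sel2 c z <> sel1 c z.
Proof. intro H. exact (epsilon_spec inhA (fun w => op w = c /\ E w z /\ w <> sel1 c z) H). Qed.

Definition kept (w : A) : Prop := T w \/ w = sel1 (op w) w \/ w = sel2 (op w) w.
Definition SS (y : A) : Prop := forall n, kept (iter n op y).

Lemma S_op y : SS y -> SS (op y).
Proof. intros H n. rewrite iter_S_r. exact (H (S n)). Qed.

Lemma T_S y : T y -> SS y.
Proof. intros H n. left. apply T_iter. exact H. Qed.

Lemma S_child c w : SS c -> op w = c -> kept w -> SS w.
Proof. intros H Hw Kw [|n]; [exact Kw|]. simpl. rewrite <- iter_S_r, Hw. apply H. Qed.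

Lemma sel1_S c z : SS c -> (exists w, op w = c /\ E w z) -> SS (sel1 c z).
Proof.
  intros Sc Hex. destruct (sel1_spec c z Hex) as [H1 [H2 _]].
  apply (S_child c); auto. right; left. rewrite H1. symmetry. apply sel1_class. exact H2.
Qed.

Lemma sel2_S c z : SS c -> (exists w, op w = c /\ E w z /\ w <> sel1 c z) -> SS (sel2 c z).
Proof.
  intros Sc Hex. destruct (sel2_spec c z Hex) as [H1 [H2 _]].
  apply (S_child c); auto. right; right. rewrite H1. symmetry. apply sel2_class. exact H2.
Qed.

Lemma child_exists c z : E c (op z) -> exists w, op w = c /\ E w z.
Proof.
  intro H. destruct (eqv_bis A (op z) c (eqv_sym A _ _ H)) as [H1 _].
  destruct (H1 z eq_refl) as [w [? ?]]. exists w. split; auto. apply eqv_sym; auto.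
Qed.

Lemma S_child1 a w : SS a -> op w = a -> exists w', op w' = a /\ SS w' /\ E w w'.
Proof.
  intros Sa Hw. assert (Hex : exists w', op w' = a /\ E w' w) by (exists w; split; auto using eqv_refl).
  exists (sel1 a w). destruct (sel1_spec a w Hex) as [? [? _]].
  repeat split; auto using sel1_S, eqv_sym.
Qed.

Lemma S_child2 a w1 w2 : SS a -> op w1 = a -> op w2 = a -> w1 <> w2 ->
  exists w1' w2', op w1' = a /\ op w2' = a /\ SS w1' /\ SS w2' /\ w1' <> w2' /\ E w1 w1' /\ E w2 w2'.
Proof.
  intros Sa H1 H2 Hn.
  assert (Hex1 : exists w', op w' = a /\ E w' w1) by (exists w1; split; auto using eqv_refl).
  assert (Hex2 : exists w', op w' = a /\ E w' w2) by (exists w2; split; auto using eqv_refl).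
  destruct (sel1_spec a w1 Hex1) as [A1 [B1 _]].
  destruct (sel1_spec a w2 Hex2) as [A2 [B2 _]].
  destruct (classic (E w1 w2)) as [Hc|Hc].
  - assert (Hex : exists w, op w = a /\ E w w1 /\ w <> sel1 a w1).
    { destruct (classic (w1 = sel1 a w1)) as [e|e].
      - exists w2. repeat split; auto using eqv_sym. congruence.
      - exists w1. repeat split; auto using eqv_refl. }
    destruct (sel2_spec a w1 Hex) as [C1 [C2 C3]].
    exists (sel1 a w1), (sel2 a w1). repeat split; auto using sel1_S, sel2_S, eqv_sym.
    apply eqv_trans with w1; auto using eqv_sym.
  - exists (sel1 a w1), (sel1 a w2). repeat split; auto using sel1_S, eqv_sym.
    intro e. apply Hc. apply eqv_trans with (sel1 a w1); auto using eqv_sym.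
    rewrite e. auto using eqv_sym.
Qed.

Lemma kept_in c z x : op x = c -> kept x -> E x z -> x = sel1 c z \/ x = sel2 c z.
Proof.
  intros Hx [Tx|[K|K]] Ex.
  - left. symmetry. apply sel1_T; auto.
  - left. rewrite K at 1. rewrite Hx. apply sel1_class; auto.
  - right. rewrite K at 1. rewrite Hx. apply sel2_class; auto.
Qed.

Lemma kept_three c x1 x2 x3 : op x1 = c -> op x2 = c -> op x3 = c ->
  kept x1 -> kept x2 -> kept x3 -> E x1 x2 -> E x1 x3 ->
  x1 = x2 \/ x1 = x3 \/ x2 = x3.
Proof.
  intros H1 H2 H3 K1 K2 K3 E12 E13.
  destruct (kept_in c x1 x1 H1 K1 (eqv_refl _ _)) as [e1|e1];
  destruct (kept_in c x1 x2 H2 K2 (eqv_sym _ _ _ E12)) as [e2|e2];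
  destruct (kept_in c x1 x3 H3 K3 (eqv_sym _ _ _ E13)) as [e3|e3]; 
  first [left; congruence | right; left; congruence | right; right; congruence].
Qed.


Definition kd (y : A) : nat := epsilon (inhabits 0)
  (fun n => T (iter n op y) /\ forall m, T (iter m op y) -> n <= m).

Lemma kd_spec y : T (iter (kd y) op y) /\ forall m, T (iter m op y) -> kd y <= m.
Proof.
  apply (epsilon_spec (inhabits 0) (fun n => T (iter n op y) /\ forall m, T (iter m op y) -> n <= m)).
  apply min_nat. destruct (hA y x0) as [m [n H]]. exists m. rewrite H. exists n. reflexivity.
Qed.

Lemma kd_0 y : T y -> kd y = 0.
Proof. intro H. destruct (kd_spec y) as [_ M]. specialize (M 0 H). lia. Qed.

Lemma kd_T y : kd y = 0 -> T y.
Proof. intro H. destruct (kd_spec y) as [M _]. rewrite H in M. exact M. Qed.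

Lemma kd_S y n : kd y = S n -> kd (op y) = n.
Proof.
  intro H. destruct (kd_spec y) as [M1 M2]. destruct (kd_spec (op y)) as [N1 N2].
  rewrite H in M1. assert (T (iter n op (op y))) by (rewrite iter_S_r; exact M1).
  specialize (N2 n H0).
  assert (T (iter (S (kd (op y))) op y)) by (simpl; rewrite <- iter_S_r; exact N1).
  specialize (M2 _ H1). lia.
Qed.

Fixpoint Pf (f : A -> A -> A) (n : nat) (y : A) : A :=
  match n with 0 => y | S n' => f (Pf f n' (op y)) y end.
Definition pf f y := Pf f (kd y) y.
Definition valid (f : A -> A -> A) := forall c z, SS c -> E c (op z) ->
  op (f c z) = c /\ SS (f c z) /\ E (f c z) z.

Lemma pf_T f y : T y -> pf f y = y.
Proof. intro H. unfold pf. rewrite (kd_0 y H). reflexivity. Qed.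

Lemma pf_S f y n : kd y = S n -> pf f y = f (pf f (op y)) y.
Proof. intro H. unfold pf. rewrite H, (kd_S y n H). reflexivity. Qed.

Lemma pf_inv f : valid f -> forall y, SS (pf f y) /\ E (pf f y) y.
Proof.
  intros Hf y. remember (kd y) as n eqn:Hn. revert y Hn. induction n; intros y Hn.
  - assert (Ty : T y) by (apply kd_T; auto). rewrite pf_T by exact Ty.
    split; auto using T_S, eqv_refl.
  - rewrite (pf_S f y n (eq_sym Hn)).
    destruct (IHn (op y) (eq_sym (kd_S y n (eq_sym Hn)))) as [H1 H2].
    destruct (Hf _ y H1 H2) as [? [? ?]]. auto.
Qed.

Lemma pf_hom f : valid f -> forall y, pf f (op y) = op (pf f y).
Proof.
  intros Hf y. destruct (kd y) as [|n] eqn:Hn.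
  - assert (Ty : T y) by (apply kd_T; auto). rewrite !pf_T; auto using T_op.
  - rewrite (pf_S f y n Hn). destruct (pf_inv f Hf (op y)) as [H1 H2].
    destruct (Hf _ y H1 H2) as [? _]. auto.
Qed.

Lemma pf_iter f : valid f -> forall n y, iter n op (pf f y) = pf f (iter n op y).
Proof. intros Hf n y. induction n; simpl; auto. rewrite IHn, pf_hom; auto. Qed.

Lemma pf_same f x y : valid f -> pf f x = pf f y -> exists K, iter K op x = iter K op y.
Proof.
  intros Hf H. exists (kd x + kd y).
  assert (Hx : iter (kd x) op (pf f x) = iter (kd x) op x).
  { rewrite pf_iter by auto. apply pf_T. apply kd_spec. }
  assert (Hy : iter (kd y) op (pf f y) = iter (kd y) op y).
  { rewrite pf_iter by auto. apply pf_T. apply kd_spec. }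
  transitivity (iter (kd x + kd y) op (pf f y)).
  - rewrite Nat.add_comm, iter_add, <- Hx, H, <- iter_add, Nat.add_comm. reflexivity.
  - rewrite iter_add, Hy. symmetry. apply iter_add.
Qed.

Definition f0 (c z : A) : A :=
  if excluded_middle_informative (SS z /\ op z = c) then z else sel1 c z.

Lemma f0_valid : valid f0.
Proof.
  intros c z Sc Ec. unfold f0. destruct (excluded_middle_informative _) as [[H1 H2]|N].
  - auto using eqv_refl.
  - destruct (child_exists c z Ec) as [w [Hw Ew]].
    destruct (sel1_spec c z (ex_intro _ w (conj Hw Ew))) as [? [? _]].
    repeat split; auto. apply sel1_S; eauto.
Qed.

Lemma pf_f0_id y : SS y -> pf f0 y = y.
Proof.
  remember (kd y) as n eqn:Hn. revert y Hn. induction n; intros y Hn Sy.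
  - apply pf_T, kd_T; auto.
  - rewrite (pf_S f0 y n (eq_sym Hn)).
    rewrite (IHn (op y) (eq_sym (kd_S y n (eq_sym Hn))) (S_op y Sy)).
    unfold f0. destruct (excluded_middle_informative _) as [_|N]; auto.
    exfalso; auto.
Qed.

Definition f1 (v c z : A) : A :=
  if excluded_middle_informative (z = v /\ exists w, op w = c /\ E w z /\ w <> sel1 c z)
  then sel2 c z else sel1 c z.

Lemma f1_valid v : valid (f1 v).
Proof.
  intros c z Sc Ec. unfold f1. destruct (excluded_middle_informative _) as [[H1 H2]|N].
  - destruct (sel2_spec c z H2) as [? [? _]]. repeat split; auto. apply sel2_S; auto.
  - destruct (child_exists c z Ec) as [w [Hw Ew]].
    destruct (sel1_spec c z (ex_intro _ w (conj Hw Ew))) as [? [? _]].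
    repeat split; auto. apply sel1_S; eauto.
Qed.

Lemma sep_sib u v : op u = op v -> u <> v -> ~ T v -> E u v ->
  pf (f1 v) u <> pf (f1 v) v.
Proof.
  intros Hop Hn Tv Euv.
  destruct (kd v) as [|n] eqn:Hk; [exfalso; apply Tv, kd_T; auto|].
  set (c := op v).
  destruct (pf_inv (f1 v) (f1_valid v) c) as [Sc Ec].
  destruct (eqv_bis A c (pf (f1 v) c) (eqv_sym _ _ _ Ec)) as [_ [_ [B3 _]]].
  destruct (B3 u v Hop eq_refl Hn) as [b1 [b2 [Hb1 [Hb2 [Hbn [Eb1 Eb2]]]]]].
  assert (Hex : exists w, op w = pf (f1 v) c /\ E w v /\ w <> sel1 (pf (f1 v) c) v).
  { destruct (classic (b1 = sel1 (pf (f1 v) c) v)) as [e|e].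
    - exists b2. repeat split; auto using eqv_sym. congruence.
    - exists b1. repeat split; auto. apply eqv_trans with u; auto using eqv_sym. }
  assert (Pv : pf (f1 v) v = sel2 (pf (f1 v) c) v).
  { rewrite (pf_S _ v n Hk). unfold f1. destruct (excluded_middle_informative _) as [_|N];
    [reflexivity|exfalso; auto]. }
  assert (Pu : pf (f1 v) u = sel1 (pf (f1 v) c) v).
  { destruct (classic (T u)) as [Tu|Tu].
    - rewrite pf_T by auto. assert (Tc : T c) by (unfold c; rewrite <- Hop; apply T_op; auto).
      rewrite (pf_T _ c Tc). symmetry. apply sel1_T; auto.
    - destruct (kd u) as [|m] eqn:Hm; [exfalso; apply Tu, kd_T; auto|].
      rewrite (pf_S _ u m Hm). unfold f1. destruct (excluded_middle_informative _) as [[e _]|N];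
      [exfalso; auto|]. fold c. rewrite Hop. apply sel1_class; auto. }
  rewrite Pu, Pv. destruct (sel2_spec _ _ Hex) as [_ [_ H]]. auto.
Qed.

Lemma separation x y : x <> y -> exists f, valid f /\ pf f x <> pf f y.
Proof.
  intro Hxy.
  destruct (classic (exists K, iter K op x = iter K op y)) as [HK|HK].
  2:{ exists f0. split; [exact f0_valid|]. intro e. apply HK. eapply pf_same; eauto using f0_valid. }
  destruct (min_nat _ HK) as [K [HK1 HK2]].
  destruct K as [|K]; [exfalso; auto|].
  set (u := iter K op x). set (v := iter K op y).
  assert (Hop : op u = op v) by exact HK1.
  assert (Hn : u <> v) by (intro e; specialize (HK2 K e); lia).
  assert (gen : forall f, valid f -> pf f u <> pf f v -> pf f x <> pf f y).
  { intros f Hf H e. apply H. unfold u, v. rewrite <- !pf_iter by auto. rewrite e. reflexivity. }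
  destruct (classic (E u v)) as [Euv|Euv].
  - destruct (classic (T v)) as [Tv|Tv].
    + assert (Tu : ~ T u) by (intro Tu; apply Hn; apply T_sib; auto).
      exists (f1 u). split; [apply f1_valid|]. apply gen; [apply f1_valid|].
      intro e. apply (sep_sib v u); auto using eqv_sym.
    + exists (f1 v). split; [apply f1_valid|]. apply gen; [apply f1_valid|].
      apply sep_sib; auto.
  - exists f0. split; [exact f0_valid|]. apply gen; [exact f0_valid|].
    intro e. apply Euv. destruct (pf_inv f0 f0_valid u) as [_ E1].
    destruct (pf_inv f0 f0_valid v) as [_ E2].
    apply eqv_trans with (pf f0 u); auto using eqv_sym. rewrite e. exact E2.
Qed.

Lemma sig_eq_gen {X : Type} (P : X -> Prop) (p q : sig P) : proj1_sig p = proj1_sig q -> p = q.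
Proof.
  destruct p as [x px], q as [y py]. simpl. intros ->. f_equal. apply proof_irrelevance.
Qed.

Lemma SS_ne : exists x, SS x.
Proof. exists x0. apply T_S. exists 0. reflexivity. Qed.

Definition B : alg := subalg SS S_op SS_ne.

Lemma B_op (b : B) : proj1_sig (op b) = op (proj1_sig b).
Proof. reflexivity. Qed.

Lemma B_iter n (b : B) : proj1_sig (iter n op b) = iter n op (proj1_sig b).
Proof. induction n; simpl; auto. rewrite <- IHn. reflexivity. Qed.

Lemma B_eq (p q : B) : proj1_sig p = proj1_sig q -> p = q.
Proof. apply sig_eq_gen. Qed.

Lemma B_connected : connected B.
Proof.
  intros x y. destruct (hA (proj1_sig x) (proj1_sig y)) as [m [n H]].
  exists m, n. apply B_eq. rewrite !B_iter. exact H.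
Qed.

Lemma B_child (b : B) (w : A) (Sw : SS w) : op w = proj1_sig b -> op (exist SS w Sw : B) = b.
Proof. intro H. apply B_eq. simpl. exact H. Qed.

Lemma eqv_B_A (b1 b2 : B) : eqv B b1 b2 -> E (proj1_sig b1) (proj1_sig b2).
Proof.
  intro H.
  set (Rr := fun a b : A => exists a' b' : B, E a (proj1_sig a') /\ eqv B a' b' /\ E (proj1_sig b') b).
  assert (bisR : bis2 A Rr).
  { intros a b [a' [b' [Ea [Eab Eb]]]].
    destruct (eqv_bis A _ _ Ea) as [A1 [A2 [A3 A4]]].
    destruct (eqv_bis B _ _ Eab) as [M1 [M2 [M3 M4]]].
    destruct (eqv_bis A _ _ Eb) as [C1 [C2 [C3 C4]]].
    split; [|split; [|split]].
    - intros x Hx. destruct (A1 x Hx) as [x' [Hx' Ex']].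
      destruct (S_child1 _ _ (proj2_sig a') Hx') as [x'' [Hx'' [Sx'' Ex'']]].
      destruct (M1 (exist SS x'' Sx'') (B_child _ _ _ Hx'')) as [by_ [Hby Eby]].
      assert (Hby' : op (proj1_sig by_) = proj1_sig b') by (rewrite <- Hby; reflexivity).
      destruct (C1 _ Hby') as [y [Hy Ey]].
      exists y. split; auto. exists (exist SS x'' Sx''), by_. repeat split; auto.
      simpl. eapply eqv_trans; eauto.
    - intros y Hy. destruct (C2 y Hy) as [y' [Hy' Ey']].
      destruct (S_child1 _ _ (proj2_sig b') Hy') as [y'' [Hy'' [Sy'' Ey'']]].
      destruct (M2 (exist SS y'' Sy'') (B_child _ _ _ Hy'')) as [bx [Hbx Ebx]].
      assert (Hbx' : op (proj1_sig bx) = proj1_sig a') by (rewrite <- Hbx; reflexivity).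
      destruct (A2 _ Hbx') as [x [Hx Ex]].
      exists x. split; auto. exists bx, (exist SS y'' Sy''). repeat split; auto.
      simpl. apply eqv_trans with y'; auto using eqv_sym.
    - intros x1 x2 Hx1 Hx2 Hxn. destruct (A3 x1 x2 Hx1 Hx2 Hxn) as [x1' [x2' [H1 [H2 [Hn' [E1 E2]]]]]].
      destruct (S_child2 _ _ _ (proj2_sig a') H1 H2 Hn') as [x1'' [x2'' [G1 [G2 [S1 [S2 [Gn [F1 F2]]]]]]]].
      assert (Bn : (exist SS x1'' S1 : B) <> exist SS x2'' S2) by (intro e; apply Gn; exact (f_equal (@proj1_sig _ _) e)).
      destruct (M3 _ _ (B_child _ _ _ G1) (B_child _ _ _ G2) Bn) as [by1 [by2 [K1 [K2 [Kn [L1 L2]]]]]].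
      assert (K1' : op (proj1_sig by1) = proj1_sig b') by (rewrite <- K1; reflexivity).
      assert (K2' : op (proj1_sig by2) = proj1_sig b') by (rewrite <- K2; reflexivity).
      assert (Kn' : proj1_sig by1 <> proj1_sig by2) by (intro e; apply Kn; apply B_eq; exact e).
      destruct (C3 _ _ K1' K2' Kn') as [y1 [y2 [N1 [N2 [Nn [O1 O2]]]]]].
      exists y1, y2. repeat split; auto.
      + exists (exist SS x1'' S1), by1. repeat split; auto. simpl. eapply eqv_trans; eauto.
      + exists (exist SS x2'' S2), by2. repeat split; auto. simpl. eapply eqv_trans; eauto.
    - intros y1 y2 Hy1 Hy2 Hyn. destruct (C4 y1 y2 Hy1 Hy2 Hyn) as [y1' [y2' [H1 [H2 [Hn' [E1 E2]]]]]].
      destruct (S_child2 _ _ _ (proj2_sig b') H1 H2 Hn') as [y1'' [y2'' [G1 [G2 [S1 [S2 [Gn [F1 F2]]]]]]]].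
      assert (Bn : (exist SS y1'' S1 : B) <> exist SS y2'' S2) by (intro e; apply Gn; exact (f_equal (@proj1_sig _ _) e)).
      destruct (M4 _ _ (B_child _ _ _ G1) (B_child _ _ _ G2) Bn) as [bx1 [bx2 [K1 [K2 [Kn [L1 L2]]]]]].
      assert (K1' : op (proj1_sig bx1) = proj1_sig a') by (rewrite <- K1; reflexivity).
      assert (K2' : op (proj1_sig bx2) = proj1_sig a') by (rewrite <- K2; reflexivity).
      assert (Kn' : proj1_sig bx1 <> proj1_sig bx2) by (intro e; apply Kn; apply B_eq; exact e).
      destruct (A4 _ _ K1' K2' Kn') as [x1 [x2 [N1 [N2 [Nn [O1 O2]]]]]].
      exists x1, x2. repeat split; auto.
      + exists bx1, (exist SS y1'' S1). repeat split; auto. simpl. apply eqv_trans with y1'; auto using eqv_sym.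
      + exists bx2, (exist SS y2'' S2). repeat split; auto. simpl. apply eqv_trans with y2'; auto using eqv_sym. }
  apply (bis_eqv A Rr); auto. exists b1, b2. repeat split; auto using eqv_refl.
Qed.

Lemma B_star : star B.
Proof.
  intros x1 x2 x3 H12 H23 P12 P13 P23.
  assert (H13 : op x1 = op x3) by congruence.
  destruct (P_iso_eqv B x1 x2 H12 P12) as [e|E12]; [left; exact e|].
  destruct (P_iso_eqv B x1 x3 H13 P13) as [e|E13]; [right; left; exact e|].
  destruct (P_iso_eqv B x2 x3 H23 P23) as [e|E23]; [right; right; exact e|].
  assert (o2 : op (proj1_sig x2) = op (proj1_sig x1)) by (rewrite <- !B_op; congruence).
  assert (o3 : op (proj1_sig x3) = op (proj1_sig x1)) by (rewrite <- !B_op; congruence).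
  destruct (kept_three (op (proj1_sig x1)) (proj1_sig x1) (proj1_sig x2) (proj1_sig x3)
     eq_refl o2 o3 (proj2_sig x1 0) (proj2_sig x2 0) (proj2_sig x3 0)
     (eqv_B_A _ _ E12) (eqv_B_A _ _ E13)) as [e|[e|e]].
  - left; apply B_eq; exact e.
  - right; left; apply B_eq; exact e.
  - right; right; apply B_eq; exact e.
Qed.

Lemma iso_refl (X : alg) : iso X X.
Proof. exists (fun x => x), (fun x => x). unfold is_hom. repeat split; auto. Qed.

Lemma B_R : R A B.
Proof.
  exists SS, S_op, SS_ne. split; [|apply iso_refl].
  exists (pf f0). split; [|split].
  - intro x. apply pf_hom, f0_valid.
  - intro x. apply (pf_inv f0 f0_valid x).
  - apply pf_f0_id.
Qed.

Definition I := {f : A -> A -> A | valid f}.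
Definition i0 : I := exist _ f0 f0_valid.
Definition D : alg := prod_alg (fun _ : I => B).
Definition Hm (a : A) : D :=
  fun i => exist SS (pf (proj1_sig i) a) (proj1 (pf_inv _ (proj2_sig i) a)).

Lemma Hm_hom a : Hm (op a) = op (Hm a).
Proof.
  apply functional_extensionality_dep. intro i. apply B_eq. simpl.
  apply pf_hom. exact (proj2_sig i).
Qed.

Lemma Hm_inj a b : Hm a = Hm b -> a = b.
Proof.
  intro H. apply NNPP. intro n. destruct (separation a b n) as [f [Hf Hne]].
  apply Hne. exact (f_equal (fun t : D => proj1_sig (t (exist _ f Hf))) H).
Qed.

Definition Img (t : D) : Prop := exists a, t = Hm a.
Definition Uset (t : D) : Prop := exists n, Img (iter n op t).
Definition Hinv (t : D) : A := epsilon inhA (fun a => t = Hm a).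

Lemma Hinv_Hm a : Hinv (Hm a) = a.
Proof.
  symmetry. apply Hm_inj. exact (epsilon_spec inhA (fun x => Hm a = Hm x) (ex_intro _ a eq_refl)).
Qed.

Definition kU (t : D) : nat := epsilon (inhabits 0)
  (fun n => Img (iter n op t) /\ forall m, Img (iter m op t) -> n <= m).

Lemma kU_spec t : Uset t -> Img (iter (kU t) op t) /\ forall m, Img (iter m op t) -> kU t <= m.
Proof.
  intro H. apply (epsilon_spec (inhabits 0) (fun n => Img (iter n op t) /\ forall m, Img (iter m op t) -> n <= m)).
  apply min_nat. exact H.
Qed.

Lemma Uset_op t : Uset t -> Uset (op t).
Proof.
  intros [n [a Ha]]. exists n. exists (op a). rewrite iter_S_r, Ha. symmetry. apply Hm_hom.
Qed.

Lemma Uset_op_inv t : Uset (op t) -> Uset t.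
Proof. intros [n Hn]. exists (S n). rewrite iter_S_r in Hn. exact Hn. Qed.

Lemma kU_S t n : Uset t -> kU t = S n -> kU (op t) = n.
Proof.
  intros U H. destruct (kU_spec t U) as [M1 M2]. destruct (kU_spec (op t) (Uset_op t U)) as [N1 N2].
  rewrite H in M1. assert (Img (iter n op (op t))) by (rewrite iter_S_r; exact M1).
  specialize (N2 n H0).
  assert (Img (iter (S (kU (op t))) op t)) by (rewrite iter_S_r in N1; exact N1).
  specialize (M2 _ H1). lia.
Qed.

Definition cho (c z : A) : A := epsilon inhA (fun w => op w = c /\ E w z).

Lemma cho_spec c z : E c (op z) -> op (cho c z) = c /\ E (cho c z) z.
Proof. intro H. exact (epsilon_spec inhA (fun w => op w = c /\ E w z) (child_exists c z H)). Qed.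

Fixpoint G (n : nat) (t : D) : A :=
  match n with 0 => Hinv t | S n' => cho (G n' (op t)) (proj1_sig (t i0)) end.

Definition g (t : D) : A :=
  if excluded_middle_informative (Uset t) then G (kU t) t else proj1_sig (t i0).

Lemma G_inv n : forall t, Uset t -> kU t = n -> E (G n t) (proj1_sig (t i0)).
Proof.
  induction n; intros t U Hk.
  - destruct (kU_spec t U) as [M _]. rewrite Hk in M. destruct M as [a Ha]. simpl in Ha.
    simpl. rewrite Ha, Hinv_Hm. simpl. apply eqv_sym. apply (pf_inv f0 f0_valid a).
  - simpl. apply cho_spec. apply (IHn (op t) (Uset_op t U) (kU_S t n U Hk)).
Qed.

Lemma g_Hm a : g (Hm a) = a.
Proof.
  unfold g. destruct (excluded_middle_informative _) as [U|U].
  - destruct (kU_spec _ U) as [_ M]. specialize (M 0 (ex_intro _ a eq_refl)).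
    replace (kU (Hm a)) with 0 by lia. apply Hinv_Hm.
  - exfalso. apply U. exists 0. exists a. reflexivity.
Qed.

Lemma g_hom t : g (op t) = op (g t).
Proof.
  unfold g. destruct (excluded_middle_informative (Uset t)) as [U|U].
  - destruct (excluded_middle_informative (Uset (op t))) as [U'|U']; [|exfalso; auto using Uset_op].
    destruct (kU t) as [|n] eqn:Hk.
    + destruct (kU_spec t U) as [M _]. rewrite Hk in M. destruct M as [a Ha]. simpl in Ha.
      assert (Hop : op t = Hm (op a)) by (rewrite Ha; symmetry; apply Hm_hom).
      destruct (kU_spec (op t) U') as [_ M]. specialize (M 0 (ex_intro _ (op a) Hop)).
      replace (kU (op t)) with 0 by lia. change (Hinv (op t) = op (Hinv t)). rewrite Hop, Ha, !Hinv_Hm. reflexivity.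
    + rewrite (kU_S t n U Hk). change (G n (op t) = op (cho (G n (op t)) (proj1_sig (t i0)))). symmetry. apply cho_spec.
      apply (G_inv n (op t) U' (kU_S t n U Hk)).
  - destruct (excluded_middle_informative (Uset (op t))) as [U'|U']; [exfalso; auto using Uset_op_inv|].
    reflexivity.
Qed.

Lemma Img_op t : Img t -> Img (op t).
Proof. intros [a ->]. exists (op a). symmetry. apply Hm_hom. Qed.

Lemma Img_ne : exists t, Img t.
Proof. exists (Hm x0). exists x0. reflexivity. Qed.

Lemma R_D_A : R D A.
Proof.
  exists Img, Img_op, Img_ne. split.
  - exists (fun t => Hm (g t)). split; [|split].
    + intro t. cbv beta. rewrite g_hom. apply Hm_hom.
    + intro t. exists (g t). reflexivity.
    + intros t [a ->]. rewrite g_Hm. reflexivity.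
  - exists (fun a => exist Img (Hm a) (ex_intro _ a eq_refl)), (fun s => g (proj1_sig s)).
    split; [|split; [|split]].
    + intro a. apply sig_eq_gen. simpl. apply Hm_hom.
    + intro s. simpl. apply g_hom.
    + intro a. simpl. apply g_Hm.
    + intros [t [a Ha]]. apply sig_eq_gen. simpl. subst t. rewrite g_Hm. reflexivity.
Qed.

End Main.


Theorem lemma4p4 (A : alg) (hA : connected A) :
  exists B : alg, R A B /\ Ustar_c B /\
    (forall C : alg, V (single A) C <-> V (single B) C).
Proof.
  exists (B A). split; [apply B_R; exact hA|]. split; [split; [apply B_connected; exact hA|apply B_star]|].
  intro C. split.
  - intros HV Cl HCl HB. apply HV; auto. intros X HX. rewrite HX.
    destruct HCl as [Hiso [HR Hprod]].
    apply (HR (D A) A); [|apply R_D_A; exact hA].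
    apply Hprod. intro i. apply HB. reflexivity.
  - intros HV Cl HCl HAc. apply HV; auto. intros X HX. rewrite HX.
    destruct HCl as [Hiso [HR Hprod]].
    apply (HR A (B A)); [apply HAc; reflexivity|apply B_R; exact hA].
Qed.
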